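(* Let $G(\mathcal V,\mathcal E)$ be a finite simple directed graph with $n=|\mathcal V|\ge 2$ nodes and let $f\ge 0$ be an integer. Byzantine consensus (with binary inputs, tolerating up to $f$ Byzantine faulty nodes) is possible in $G(\mathcal V,\mathcal E)$ if and only if for every partition $A,B,F$ of $\mathcal V$ with $A$ and $B$ both non-empty and $0\le |F|\le f$, either $A \Rightarrow_{\mathcal V - F} B$ or $B \Rightarrow_{\mathcal V - F} A$.
   Context: Network model: $G(\mathcal V,\mathcal E)$ is a simple directed graph without self-loops; node $i$ can send messages directly to node $j$ if and only if $(i,j)\in\mathcal E$. The system is synchronous, links are reliable, FIFO and deliver each message exactly once within bounded time; the topology is known to all nodes. Each node has an input in $\{0,1\}$. Up to $f$ nodes may be Byzantine faulty: they may deviate arbitrarily from the algorithm (e.g. send inconsistent messages to different neighbors), may collude, and know the whole execution state, the algorithm and the topology. An algorithm is a correct Byzantine consensus algorithm if, for every set of at most $f$ faulty nodes, every behavior of the faulty nodes and all inputs: (Agreement) all fault-free nodes output the same value; (Validity) the output of every fault-free node equals the input of some fault-free node; (Termination) every fault-free node eventually decides on an output. ''Byzantine consensus is possible in $G$'' means that such an algorithm exists for $G$. Paths: an $(A,b)$-path (for $A\subseteq\mathcal V$, $b\notin A$) is a directed path from some node of $A$ to $b$; it ''excludes $F$'' if it contains no node of $F$. Several $(A,b)$-paths are disjoint if they pairwise share only the node $b$ (in particular their source nodes are distinct). Propagation: for pairwise disjoint $A,B,F\subseteq\mathcal V$ with $|F|\le f$, we write $A \Rightarrow_{\mathcal V -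 F} B$ (''$A$ propagates in $\mathcal V-F$ to $B$'') if either $B=\emptyset$, or for every $b\in B$ there exist at least $f+1$ pairwise disjoint $(A,b)$-paths excluding $F$. *)

(* Defs.v *)
From mathcomp Require Import all_boot.
Set Implicit Arguments. Unset Strict Implicit. Unset Printing Implicit Defensive.

(* Nodes: a finite type T; edges: e : rel T, (i,j) is an edge iff e i j.
   A simple directed graph without self-loops is an irreflexive relation. *)

Definition is_Abpath (T : finType) (e : rel T) (A : {set T}) (b : T)
    (s : seq T) : Prop :=
  match s with
  | [::] => False
  | x :: p => [/\ x \in A, path e x p, last x p = b & uniq (x :: p)]
  end.

Definition excludes (T : finType) (F : {set T}) (s : seq T) : bool :=
  all (fun x => x \notin F) s.

(* A =>_{V - F} B : B empty, or every b in B has f+1 pairwise disjoint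
   (A,b)-paths excluding F (pairwise sharing only the node b). *)
Definition propagates (T : finType) (e : rel T) (f : nat)
    (F A B : {set T}) : Prop :=
  B = set0 \/
  forall b, b \in B ->
    exists P : 'I_f.+1 -> seq T,
      (forall k, is_Abpath e A b (P k) /\ excludes F (P k)) /\
      (forall k l, k != l -> forall x, x \in P k -> x \in P l -> x = b).

(* A deterministic synchronous algorithm: each node i has a local state
   (which may record the round number), an initial state depending on
   its identity and binary input, a message it sends in each round to each
   out-neighbour, a state transition on the messages received from its
   in-neighbours (None for non-neighbours), and a decision function. *)
Record algorithm (T : finType) := Algorithm {
  state_t : Type;
  msg_t : Type;
  init : T -> bool -> state_t;
  send : T -> state_t -> T -> msg_t;
  trans : T -> state_t -> (T -> option msg_t) -> state_t;
  decide : T -> state_t -> option bool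
}.

(* Since the
   execution is deterministic, quantifying over all such adv covers every
   (adaptive, colluding, omniscient) Byzantine behaviour. *)
Fixpoint exec (T : finType) (e : rel T) (alg : algorithm T) (F : {set T})
    (adv : nat -> T -> T -> msg_t alg) (input : T -> bool) (r : nat)
    : T -> state_t alg :=
  match r with
  | 0 => fun i => @init T alg i (input i)
  | r'.+1 => fun i =>
      @trans T alg i (exec e F adv input r' i)
        (fun k => if e k i then
                    Some (if k \in F then adv r' k i
                          else @send T alg k (exec e F adv input r' k) i)
                  else None)
  end.

(* node i (irrevocably) decides b: its first decision is b *)
Definition decides (T : finType) (e : rel T) (alg : algorithm T)
    (F : {set T}) (adv : nat -> T -> T -> msg_t alg) (input : T -> bool)
    (i : T) (b : bool) : Prop :=
  exists r, @decide T alg i (exec e F adv input r i) = Some b /\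
            forall r', r' < r -> @decide T alg i (exec e F adv input r' i) = None.

Definition correct_byz_consensus (T : finType) (e : rel T) (f : nat)
    (alg : algorithm T) : Prop :=
  forall (F : {set T}), #|F| <= f ->
  forall (adv : nat -> T -> T -> msg_t alg) (input : T -> bool),
    (forall i, i \notin F -> exists b, decides e F adv input i b) /\
    (forall i j b c, i \notin F -> j \notin F ->
       decides e F adv input i b -> decides e F adv input j c ->
       b = c) /\
    (forall i b, i \notin F -> decides e F adv input i b ->
       exists j, j \notin F /\ input j = b).

Definition byz_consensus_possible (T : finType) (e : rel T) (f : nat) : Prop :=
  exists alg : algorithm T, correct_byz_consensus e f alg.

(* Main.v *)
Require Import Defs.
From Stdlib Require Import Classical ClassicalEpsilon FunctionalExtensionality.
From mathcomp Require Import all_boot.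
Set Implicit Arguments. Unset Strict Implicit. Unset Printing Implicit Defensive.

Section Menger.
Variable T : finType.
Implicit Types (r : rel T) (X Y Z W Q S : {set T}).

Definition restr r Z : rel T := fun u v => [&& r u v, u \notin Z & v \notin Z].
Definition rin r Q : rel T := fun u v => [&& r u v, u \in Q & v \in Q].
Definition sep r X Y Z := forall x y, x \in X -> y \in Y -> x \notin Z -> y \notin Z ->
  ~~ connect (restr r Z) x y.
Definition mfam r X Y k (Q : 'I_k -> {set T}) :=
  (forall i, exists x y, [/\ x \in X, y \in Y, x \in Q i, y \in Q i &
                            connect (rin r (Q i)) x y]) /\
  (forall i j, i != j -> [disjoint Q i & Q j]).

Lemma connect_mono (r1 r2 : rel T) : (forall u v, r1 u v -> r2 u v) ->
  forall a b, connect r1 a b -> connect r2 a b.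
Proof. by move=> H; apply: connect_sub => u v /H; apply: connect1. Qed.

Lemma connect_first (rr : rel T) a b : connect rr a b -> a = b \/ exists c, rr a c.
Proof.
case/connectP=> [[|c p]] /=; first by move=> _ ->; left.
by case/andP=> h _ _; right; exists c.
Qed.

Lemma connect_last (rr : rel T) a b : connect rr a b -> a = b \/ exists c, rr c b.
Proof.
move=> h; have h' : connect [rel x y | rr y x] b a by rewrite connect_rev.
case/connect_first: h' => [->|[c hc]]; [by left | by right; exists c].
Qed.

Lemma path_notin (rr : rel T) (P : pred T) a p : path rr a p -> P a ->
  (forall u v, rr u v -> P v) -> forall v, v \in a :: p -> P v.
Proof.
elim: p a => [|c p IH] a /=; first by move=> _ Pa _ v; rewrite inE => /eqP->.
case/andP=> hac hp Pa H v; rewrite inE => /orP[/eqP->//|].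
by apply: IH => //; apply: H hac.
Qed.

Lemma first_hit (rr : rel T) S a p : path rr a p ->
  (a \notin S /\ last a p \notin S /\
     connect (fun u v => [&& rr u v, u \notin S & v \notin S]) a (last a p)) \/
  exists s, [/\ s \in S, s \in a :: p & connect (fun u v => rr u v && (u \notin S)) a s].
Proof.
elim: p a => [|c p IH] a /=.
  move=> _; case: (boolP (a \in S)) => ha.
    by right; exists a; rewrite mem_head connect0.
  by left; rewrite connect0.
case/andP=> hac hp; case: (boolP (a \in S)) => ha.
  by right; exists a; rewrite mem_head connect0.
case: (IH c hp) => [[hc [hl hcon]]|[s [hs hsin hcon]]].
  left; split=> //; split=> //; apply: connect_trans hcon; apply: connect1.
  by rewrite hac ha hc.
right; exists s; split=> //; first by rewrite inE hsin orbT.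
by apply: connect_trans hcon; apply: connect1; rewrite hac ha.
Qed.

Lemma last_hit (rr : rel T) S a p : path rr a p ->
  (a \notin S /\ last a p \notin S /\
     connect (fun u v => [&& rr u v, u \notin S & v \notin S]) a (last a p)) \/
  exists s, [/\ s \in S, s \in a :: p & connect (fun u v => rr u v && (v \notin S)) s (last a p)].
Proof.
elim: p a => [|c p IH] a /=.
  move=> _; case: (boolP (a \in S)) => ha.
    by right; exists a; rewrite mem_head connect0.
  by left; rewrite connect0.
case/andP=> hac hp; case: (IH c hp) => [[hc [hl hcon]]|[s [hs hsin hcon]]].
  case: (boolP (a \in S)) => ha.
    right; exists a; split; rewrite ?mem_head //.
    apply: (@connect_trans _ _ c); first apply: connect1.
      by rewrite hac hc.
    by apply: connect_mono hcon => u v /and3P[-> _ ->].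
  left; split=> //; split=> //; apply: connect_trans hcon; apply: connect1.
  by rewrite hac ha hc.
by right; exists s; split=> //; rewrite inE hsin orbT.
Qed.

Lemma connect_rin_out rr Q a b : connect (rin rr Q) a b -> a \notin Q -> a = b.
Proof. by case/connect_first=> // [[c /and3P[_ h _]]] /negP. Qed.

Lemma trunc rr S Q a p : path (rin rr Q) a p -> a \in Q -> has (mem S) (a :: p) ->
  exists Q' s, [/\ Q' \subset Q, a \in Q', s \in Q', s \in S &
     [/\ Q' :&: S = [set s], connect (rin rr Q') a s &
     forall v, v \in Q' -> v \notin S -> connect (rin rr (Q' :\: S)) a v]].
Proof.
elim: p a => [|c p IH] a hp haQ hhas.
  have haS : a \in S by move: hhas => /= /orP[//|].
  exists [set a], a; split; [| | | |split]; rewrite ?set11 ?connect0 ?sub1set //.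
    by apply/setIidPl; rewrite sub1set.
  by move=> v; rewrite inE => /eqP-> /negP.
case: (boolP (a \in S)) => haS.
  exists [set a], a; split; [| | | |split]; rewrite ?set11 ?connect0 ?sub1set //.
    by apply/setIidPl; rewrite sub1set.
  by move=> v; rewrite inE => /eqP-> /negP.
move: hp => /= /andP[hac hp]; have hcQ : c \in Q by case/and3P: hac.
have hhas' : has (mem S) (c :: p) by move: hhas => /= /orP[h|//]; rewrite h in haS.
have [Q'' [s [hsub hcQ'' hsQ'' hsS [hI hcon hrest]]]] := IH c hp hcQ hhas'.
exists (a |: Q''), s; split; [| | | |split].
- by rewrite subUset sub1set haQ hsub.
- by rewrite setU11.
- by rewrite setU1r.
- done.
- apply/setP=> v; rewrite -hI !inE; case: (v =P a) => [->|] //=.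
  by rewrite (negbTE haS) andbF.
- apply: (@connect_trans _ _ c); first apply: connect1.
    by case/and3P: hac => h _ _; rewrite /rin h setU11 setU1r.
  by apply: connect_mono hcon => u v /and3P[h h1 h2]; rewrite /rin h !inE h1 h2 !orbT.
- move=> v /setU1P[-> _|hv hvS]; first exact: connect0.
  have hc := hrest v hv hvS.
  have hcS : c \notin S.
    apply/negP=> hcS; have := connect_rin_out hc; rewrite inE hcS /= => /(_ isT) hcv.
    by move: hvS; rewrite -hcv hcS.
  apply: (@connect_trans _ _ c); first apply: connect1.
    case/and3P: hac => h _ _; rewrite /rin h !inE haS hcS eqxx /= hcQ''.
    by rewrite orbT.
  by apply: connect_mono hc => u w /and3P[h h1 h2]; move: h1 h2; rewrite /rin h !inE;
     case/andP=> -> -> /andP[-> ->]; rewrite !orbT.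
Qed.



Lemma mfam_mono r1 r2 X Y k (Q : 'I_k -> {set T}) :
  (forall u v, r1 u v -> r2 u v) -> mfam r1 X Y Q -> mfam r2 X Y Q.
Proof.
move=> H [h1 h2]; split=> // i; have [x [y [hx hy hxQ hyQ hc]]] := h1 i.
exists x, y; split=> //; apply: connect_mono hc => u v /and3P[/H h hu hv].
by rewrite /rin h hu hv.
Qed.

Lemma menger0 r X Y k : (forall u v, ~~ r u v) ->
  (forall Z, sep r X Y Z -> k <= #|Z|) -> exists Q : 'I_k -> {set T}, mfam r X Y Q.
Proof.
move=> H0 H.
have hsep : sep r X Y (X :&: Y).
  move=> x y hx hy hnx _; apply/negP => /connect_first [exy|[c /and3P[hc _ _]]].
  - by move: hnx; rewrite inE hx exy hy.
  - by move: (H0 x c); rewrite hc.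
have hk := H _ hsep.
exists (fun i => [set enum_val (widen_ord hk i)]); split.
  move=> i; set z := enum_val _; have : z \in X :&: Y by apply: enum_valP.
  by rewrite inE => /andP[hx hy]; exists z, z; split; rewrite ?set11 ?connect0.
move=> i j hij; rewrite disjoints1 inE; apply/negP => /eqP /enum_val_inj h.
have := congr1 val h => /= hv; move/negP: hij; apply; apply/eqP; exact: val_inj.
Qed.

Lemma flip_rin rr Q a b :
  connect (rin (fun u v => rr v u) Q) a b = connect (rin rr Q) b a.
Proof.
have E : rin (fun u v => rr v u) Q =2 [rel x y | rin rr Q y x].
  move=> u v /=; rewrite /rin.
  by case: (u \in Q); case: (v \in Q); rewrite ?andbT ?andbF.
by rewrite (eq_connect E) connect_rev.
Qed.

Lemma disjP (A B : {set T}) :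
  reflect (forall v, v \in A -> v \in B -> False) [disjoint A & B].
Proof.
apply: (iffP idP) => [h v ha hb | h]; first by rewrite (disjointFr h ha) in hb.
rewrite -setI_eq0; apply/eqP/setP => v; rewrite !inE; apply/negP => /andP[ha hb].
exact: h v ha hb.
Qed.

Definition nedges r := #|[set p : T * T | r p.1 p.2]|.

Theorem menger_ind n : forall r, nedges r <= n -> forall X Y k,
  (forall Z, sep r X Y Z -> k <= #|Z|) -> exists Q : 'I_k -> {set T}, mfam r X Y Q.
Proof.
elim: n => [|n IH] r hn X Y k H.
  apply: menger0 H => u v; apply/negP => huv.
  have : (u, v) \in [set p : T * T | r p.1 p.2] by rewrite inE.
  by move: hn; rewrite leqn0 cards_eq0 => /eqP ->; rewrite inE.
case: (set_0Vmem [set p : T * T | r p.1 p.2]) => [h0|[[x y]]].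
  apply: menger0 H => u v; apply/negP => huv.
  have : (u, v) \in [set p : T * T | r p.1 p.2] by rewrite inE.
  by rewrite h0 inE.
rewrite inE /= => rxy.
case: k H => [|k] H.
  by exists (fun i => set0); split=> -[m hm]...
pose r' := fun u v => r u v && ((u, v) != (x, y)).
have hr' : nedges r' <= n.
  rewrite -ltnS; apply: leq_trans hn; apply: proper_card; apply/properP; split.
    by apply/subsetP => [[u v]]; rewrite !inE /r' => /andP[].
  by exists (x, y); rewrite !inE /r' /= ?eqxx ?andbF ?rxy.
have r'r : forall u v, r' u v -> r u v by move=> u v /andP[].
case: (classic (forall Z, sep r' X Y Z -> k.+1 <= #|Z|)) => [H'|].
  by have [Q hQ] := IH r' hr' X Y k.+1 H'; exists Q; apply: mfam_mono hQ.
move=> Hn; have [Z [hsepZ hZ]] : exists Z, sep r' X Y Z /\ #|Z| <= k.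
  apply: NNPP => Hc; apply: Hn => Z hs; rewrite ltnNge; apply/negP => hle.
  by apply: Hc; exists Z.
set S1 := x |: Z; set S2 := y |: Z.
have sepS1 : sep r X Y S1.
  move=> a b ha hb na nb; apply/negP => hc.
  have na' : a \notin Z by move: na; rewrite !inE negb_or => /andP[].
  have nb' : b \notin Z by move: nb; rewrite !inE negb_or => /andP[].
  move: (hsepZ a b ha hb na' nb') => /negP; apply; apply: connect_mono hc.
  move=> u v /and3P[huv hu hv]; move: hu hv; rewrite !inE !negb_or.
  move=> /andP[hux huZ] /andP[_ hvZ]; apply/and3P; split => //.
  by apply/andP; split => //; rewrite xpair_eqE negb_and hux.
have sepS2 : sep r X Y S2.
  move=> a b ha hb na nb; apply/negP => hc.
  have na' : a \notin Z by move: na; rewrite !inE negb_or => /andP[].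
  have nb' : b \notin Z by move: nb; rewrite !inE negb_or => /andP[].
  move: (hsepZ a b ha hb na' nb') => /negP; apply; apply: connect_mono hc.
  move=> u v /and3P[huv hu hv]; move: hu hv; rewrite !inE !negb_or.
  move=> /andP[_ huZ] /andP[hvy hvZ]; apply/and3P; split => //.
  by apply/andP; split => //; rewrite xpair_eqE negb_and hvy orbT.
have hk1 := H _ sepS1; have hk2 := H _ sepS2.
rewrite cardsU1 in hk1; rewrite cardsU1 in hk2.
have hxZ : x \notin Z.
  move: hk1; case: (x \in Z) => //=; rewrite add0n => h.
  by move: (leq_trans h hZ); rewrite ltnn.
have hyZ : y \notin Z.
  move: hk2; case: (y \in Z) => //=; rewrite add0n => h.
  by move: (leq_trans h hZ); rewrite ltnn.
have cZ : #|Z| = k.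
  by apply/eqP; rewrite eqn_leq hZ; move: hk1; rewrite hxZ add1n ltnS.
have cS1 : #|S1| = k.+1 by rewrite cardsU1 hxZ cZ.
have cS2 : #|S2| = k.+1 by rewrite cardsU1 hyZ cZ.
have ZS1 : forall v, v \in Z -> v \in S1 by move=> v hv; rewrite !inE hv orbT.
have ZS2 : forall v, v \in Z -> v \in S2 by move=> v hv; rewrite !inE hv orbT.
have notW : forall W a p, path (restr r W) a p -> a \notin W ->
    forall v, v \in a :: p -> v \notin W.
  move=> W a p hp ha; apply: (path_notin (P := fun v => v \notin W)) hp ha _.
  by move=> u v /and3P[].
have H1 : forall W, sep r' X S1 W -> k.+1 <= #|W|.
  move=> W hW; apply: H => a b ha hb na nb; apply/negP => /connectP [p hp hl].
  case: (first_hit S1 hp) => [[h1 [h2 h3]]|[s [hs hsin hc]]].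
  - rewrite -hl in h2 h3; move: (sepS1 a b ha hb h1 h2) => /negP; apply.
    by apply: connect_mono h3 => u v /and3P[/and3P[h _ _] q1 q2]; rewrite /restr h q1 q2.
  - have hsW := notW W a p hp na s hsin.
    move: (hW a s ha hs na hsW) => /negP; apply; apply: connect_mono hc.
    move=> u v /andP[/and3P[huv hu hv] huS]; apply/and3P; split => //.
    apply/andP; split => //; rewrite xpair_eqE negb_and.
    by move: huS; rewrite !inE negb_or => /andP[-> _].
have H2 : forall W, sep r' S2 Y W -> k.+1 <= #|W|.
  move=> W hW; apply: H => a b ha hb na nb; apply/negP => /connectP [p hp hl].
  case: (last_hit S2 hp) => [[h1 [h2 h3]]|[s [hs hsin hc]]].
  - rewrite -hl in h2 h3; move: (sepS2 a b ha hb h1 h2) => /negP; apply.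
    by apply: connect_mono h3 => u v /and3P[/and3P[h _ _] q1 q2]; rewrite /restr h q1 q2.
  - have hsW := notW W a p hp na s hsin.
    rewrite -hl in hc.
    move: (hW s b hs hb hsW nb) => /negP; apply; apply: connect_mono hc.
    move=> u v /andP[/and3P[huv hu hv] hvS]; apply/and3P; split => //.
    apply/andP; split => //; rewrite xpair_eqE negb_and.
    by move: hvS; rewrite !inE negb_or => /andP[-> _]; rewrite orbT.
have [Q1 [hQ1 hQ1d]] := IH r' hr' X S1 k.+1 H1.
have [Q2 [hQ2 hQ2d]] := IH r' hr' S2 Y k.+1 H2.
have ZS1' : forall u, u \notin S1 -> u \notin Z.
  by move=> u; apply: contra; apply: ZS1.
have ZS2' : forall u, u \notin S2 -> u \notin Z.
  by move=> u; apply: contra; apply: ZS2.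
have T1 : forall i, exists d : {set T} * (T * T),
  [/\ d.1 \subset Q1 i, d.2.1 \in X, d.2.1 \in d.1, d.2.2 \in d.1 &
   [/\ d.2.2 \in S1, d.1 :&: S1 = [set d.2.2], connect (rin r' d.1) d.2.1 d.2.2 &
    forall v, v \in d.1 -> v \notin S1 -> connect (rin r' (d.1 :\: S1)) d.2.1 v]].
  move=> i; have [x0 [c [hx0 hc hx0Q hcQ hcon]]] := hQ1 i.
  case/connectP: hcon => p hp hl.
  have hh : has (mem S1) (x0 :: p) by apply/hasP; exists c; rewrite // hl mem_last.
  have [Q' [s [hs1 hs2 hs3 hs4 [hs5 hs6 hs7]]]] := trunc hp hx0Q hh.
  by exists (Q', (x0, s)).
have T2 : forall j, exists d : {set T} * (T * T),
  [/\ d.1 \subset Q2 j, d.2.1 \in Y, d.2.1 \in d.1, d.2.2 \in d.1 &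
   [/\ d.2.2 \in S2, d.1 :&: S2 = [set d.2.2], connect (rin r' d.1) d.2.2 d.2.1 &
    forall v, v \in d.1 -> v \notin S2 -> connect (rin r' (d.1 :\: S2)) v d.2.1]].
  move=> j; have [c [y0 [hc hy0 hcQ hy0Q hcon]]] := hQ2 j.
  rewrite -flip_rin in hcon.
  case/connectP: hcon => p hp hl.
  have hh : has (mem S2) (y0 :: p) by apply/hasP; exists c; rewrite // hl mem_last.
  have [Q' [s [hs1 hs2 hs3 hs4 [hs5 hs6 hs7]]]] := trunc hp hy0Q hh.
  exists (Q', (y0, s)); split => //; split => //; first by rewrite -flip_rin.
  by move=> v hv hvS; rewrite -flip_rin; apply: hs7.
have [d1 hd1] := fin_all_exists T1.
have [d2 hd2] := fin_all_exists T2.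
pose Q1' i := (d1 i).1; pose x1 i := (d1 i).2.1; pose s1 i := (d1 i).2.2.
pose Q2' i := (d2 i).1; pose y2 i := (d2 i).2.1; pose t2 i := (d2 i).2.2.
have hd1' : forall i, [/\ Q1' i \subset Q1 i, x1 i \in X, x1 i \in Q1' i, s1 i \in Q1' i &
   [/\ s1 i \in S1, Q1' i :&: S1 = [set s1 i], connect (rin r' (Q1' i)) (x1 i) (s1 i) &
    forall v, v \in Q1' i -> v \notin S1 -> connect (rin r' (Q1' i :\: S1)) (x1 i) v]] := hd1.
have hd2' : forall i, [/\ Q2' i \subset Q2 i, y2 i \in Y, y2 i \in Q2' i, t2 i \in Q2' i &
   [/\ t2 i \in S2, Q2' i :&: S2 = [set t2 i], connect (rin r' (Q2' i)) (t2 i) (y2 i) &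
    forall v, v \in Q2' i -> v \notin S2 -> connect (rin r' (Q2' i :\: S2)) v (y2 i)]] := hd2.
clearbody Q1' x1 s1 Q2' y2 t2; clear hd1 hd2 d1 d2 T1 T2.
have dis1 : forall i i' v, v \in Q1' i -> v \in Q1' i' -> i = i'.
  move=> i i' v h h'; apply/eqP; apply/negPn/negP => hne.
  case: (hd1' i) => s _ _ _ _; case: (hd1' i') => s' _ _ _ _.
  have D := hQ1d i i' hne; move/disjP in D.
  exact: (D v (subsetP s _ h) (subsetP s' _ h')).
have dis2 : forall i i' v, v \in Q2' i -> v \in Q2' i' -> i = i'.
  move=> i i' v h h'; apply/eqP; apply/negPn/negP => hne.
  case: (hd2' i) => s _ _ _ _; case: (hd2' i') => s' _ _ _ _.
  have D := hQ2d i i' hne; move/disjP in D.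
  exact: (D v (subsetP s _ h) (subsetP s' _ h')).
have t2inj : injective t2.
  move=> i i' h; apply: (dis2 _ _ (t2 i)); first by case: (hd2' i).
  by rewrite h; case: (hd2' i').
have t2surj : forall t, t \in S2 -> exists j, t2 j = t.
  move=> t ht.
  have hsub : [set t2 j | j in 'I_k.+1] \subset S2.
    by apply/subsetP => z /imsetP [j _ ->]; case: (hd2' j) => _ _ _ _ [].
  have /eqP E : [set t2 j | j in 'I_k.+1] == S2.
    by rewrite eqEcard hsub card_imset // card_ord cS2 leqnn.
  by rewrite -E in ht; case/imsetP: ht => j _ ->; exists j.
pose tgt i := if s1 i == x then y else s1 i.
have tgtS2 : forall i, tgt i \in S2.
  move=> i; rewrite /tgt; case: eqP => [_|hne]; first by rewrite setU11.
  have : s1 i \in S1 by case: (hd1' i) => _ _ _ _ [].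
  by rewrite !inE => /orP[/eqP//|hz]; rewrite hz orbT.
have [jj hjj] := fin_all_exists (fun i => t2surj _ (tgtS2 i)).
have cross : forall a b v, b != jj a -> v \in Q1' a -> v \in Q2' b -> False.
  move=> a b v hb hv1 hv2.
  case: (hd1' a) => _ hxX hxQ hsQ [hsS hI1 hc1 hr1].
  case: (hd2' b) => _ hyY hyQ htQ [htS hI2 hc2 hr2].
  case: (boolP (v \in Z)) => hvZ.
    have e1 : v = s1 a.
      have : v \in Q1' a :&: S1 by rewrite inE hv1 ZS1.
      by rewrite hI1 inE => /eqP.
    have e2 : v = t2 b.
      have : v \in Q2' b :&: S2 by rewrite inE hv2 ZS2.
      by rewrite hI2 inE => /eqP.
    have : tgt a = t2 b.
      rewrite /tgt -e1 -e2; case: eqP => [evx|//].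
      by move: hxZ; rewrite -evx hvZ.
    by rewrite -hjj => /t2inj hab; move: hb; rewrite hab eqxx.
  have c1 : connect (restr r' Z) (x1 a) v.
    case: (boolP (v \in S1)) => hvS.
      have ev : v = s1 a.
        have : v \in Q1' a :&: S1 by rewrite inE hv1 hvS.
        by rewrite hI1 inE => /eqP.
      have noZ : forall u, u \in Q1' a -> u \notin Z.
        move=> u hu; apply/negP => huZ; have : u \in Q1' a :&: S1 by rewrite inE hu ZS1.
        by rewrite hI1 inE => /eqP eu; move: hvZ; rewrite ev -eu huZ.
      rewrite ev; apply: connect_mono hc1 => u w /and3P[h hu hw].
      by rewrite /restr h (noZ u hu) (noZ w hw).
    apply: connect_mono (hr1 v hv1 hvS) => u w /and3P[h hu hw].
    move: hu hw; rewrite !in_setD => /andP[hu1 _] /andP[hw1 _].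
    by rewrite /restr h (ZS1' _ hu1) (ZS1' _ hw1).
  have c2 : connect (restr r' Z) v (y2 b).
    case: (boolP (v \in S2)) => hvS.
      have ev : v = t2 b.
        have : v \in Q2' b :&: S2 by rewrite inE hv2 hvS.
        by rewrite hI2 inE => /eqP.
      have noZ : forall u, u \in Q2' b -> u \notin Z.
        move=> u hu; apply/negP => huZ; have : u \in Q2' b :&: S2 by rewrite inE hu ZS2.
        by rewrite hI2 inE => /eqP eu; move: hvZ; rewrite ev -eu huZ.
      rewrite ev; apply: connect_mono hc2 => u w /and3P[h hu hw].
      by rewrite /restr h (noZ u hu) (noZ w hw).
    apply: connect_mono (hr2 v hv2 hvS) => u w /and3P[h hu hw].
    move: hu hw; rewrite !in_setD => /andP[hu1 _] /andP[hw1 _].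
    by rewrite /restr h (ZS2' _ hu1) (ZS2' _ hw1).
  have hxa : x1 a \notin Z.
    by case: (connect_first c1) => [->//|[c /and3P[]]].
  have hyb : y2 b \notin Z.
    by case: (connect_last c2) => [<-//|[c /and3P[]]].
  by move: (hsepZ _ _ hxX hyY hxa hyb); rewrite (connect_trans c1 c2).
exists (fun i => Q1' i :|: Q2' (jj i)); split.
  move=> i; case: (hd1' i) => _ hxX hxQ hsQ [hsS hI1 hc1 hr1].
  case: (hd2' (jj i)) => _ hyY hyQ htQ [htS hI2 hc2 hr2].
  exists (x1 i), (y2 (jj i)); split => //; rewrite ?inE ?hxQ ?hyQ ?orbT //.
  have m1 : forall u w, rin r' (Q1' i) u w -> rin r (Q1' i :|: Q2' (jj i)) u w.
    by move=> u w /and3P[/r'r h hu hw]; rewrite /rin h !inE hu hw.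
  have m2 : forall u w, rin r' (Q2' (jj i)) u w -> rin r (Q1' i :|: Q2' (jj i)) u w.
    by move=> u w /and3P[/r'r h hu hw]; rewrite /rin h !inE hu hw !orbT.
  apply: (connect_trans (connect_mono m1 hc1)).
  apply: connect_trans (connect_mono m2 hc2).
  move: htQ; rewrite hjj /tgt; case: eqP => [ex htQ|_ _]; last exact: connect0.
  apply: connect1; rewrite /rin ex rxy !inE htQ orbT andbT /=.
  by rewrite -ex hsQ.
have jinj : forall i i', jj i = jj i' -> i = i'.
  move=> i i' h; have : tgt i = tgt i' by rewrite -!hjj h.
  rewrite /tgt; case: eqP => [e1|/eqP ne1]; case: eqP => [e2|/eqP ne2].
  + by move=> _; apply: (dis1 _ _ (s1 i)); [case: (hd1' i) | rewrite e1 -e2; case: (hd1' i')].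
  + move=> ey; have : s1 i' \in S1 by case: (hd1' i') => _ _ _ _ [].
    by rewrite !inE (negbTE ne2) /= -ey (negbTE hyZ).
  + move=> ey; have : s1 i \in S1 by case: (hd1' i) => _ _ _ _ [].
    by rewrite !inE (negbTE ne1) /= ey (negbTE hyZ).
  + by move=> e; apply: (dis1 _ _ (s1 i)); [case: (hd1' i) | rewrite e; case: (hd1' i')].
move=> i i' hne; apply/disjP => v; rewrite !inE => /orP[h1|h1] /orP[h2|h2].
- by move: hne; rewrite (dis1 _ _ _ h1 h2) eqxx.
- apply: (cross i (jj i') v) => //; apply: contra hne => /eqP h.
  by apply/eqP; apply: jinj.
- apply: (cross i' (jj i) v) => //; apply: contra hne => /eqP h.
  by apply/eqP; symmetry; apply: jinj.
- by move: hne; rewrite (jinj _ _ (dis2 _ _ _ h1 h2)) eqxx.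
Qed.

Theorem menger r X Y k : (forall Z, sep r X Y Z -> k <= #|Z|) ->
  exists Q : 'I_k -> {set T}, mfam r X Y Q.
Proof. exact: (@menger_ind (nedges r) r (leqnn _)). Qed.

End Menger.

Section Sim.
Variable T : finType.
Variable e : rel T.
Variable alg : algorithm T.
Variables (F C1 C2 L : {set T}).
Definition in1 (j : T) : bool := j \in L.

Fixpoint joint (r : nat) : (T -> state_t alg) * (T -> state_t alg) * (T -> state_t alg) :=
 match r with
 | 0 => (fun i => @init T alg i (in1 i), fun i => @init T alg i true,
         fun i => @init T alg i false)
 | r'.+1 => let: (s1, s2, s3) := joint r' in
   (fun i => @trans T alg i (s1 i) (fun k => if e k i then
        Some (if k \in F then (if i \in L then @send T alg k (s2 k) i else @send T alg k (s3 k) i)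
              else @send T alg k (s1 k) i) else None),
    fun i => @trans T alg i (s2 i) (fun k => if e k i then
        Some (if k \in C1 then @send T alg k (s1 k) i else @send T alg k (s2 k) i) else None),
    fun i => @trans T alg i (s3 i) (fun k => if e k i then
        Some (if k \in C2 then @send T alg k (s1 k) i else @send T alg k (s3 k) i) else None))
 end.

Definition adv1 r k i := let: (s1, s2, s3) := joint r in
  if i \in L then @send T alg k (s2 k) i else @send T alg k (s3 k) i.
Definition adv2 r k i := @send T alg k ((joint r).1.1 k) i.

Lemma ex1 r : exec e F adv1 in1 r = (joint r).1.1.
Proof.
elim: r => [//|r IH] /=; rewrite IH /adv1; by case: (joint r) => [[s1 s2] s3].
Qed.
Lemma ex2 r : exec e C1 adv2 (fun _ => true) r = (joint r).1.2.
Proof.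
elim: r => [//|r IH] /=; rewrite IH /adv2; by case: (joint r) => [[s1 s2] s3].
Qed.
Lemma ex3 r : exec e C2 adv2 (fun _ => false) r = (joint r).2.
Proof.
elim: r => [//|r IH] /=; rewrite IH /adv2; by case: (joint r) => [[s1 s2] s3].
Qed.


Lemma eqL :
  (forall j, j \in L -> j \notin F) -> (forall j, j \in L -> j \notin C1) ->
  (forall k, k \in F -> k \notin C1) ->
  (forall u v, e u v -> v \in L -> [|| u \in L, u \in F | u \in C1]) ->
  forall r j, j \in L -> (joint r).1.1 j = (joint r).1.2 j.
Proof.
move=> LF LC FC cl; elim=> [|r IH] j hj /=; first by rewrite /in1 hj.
case: (joint r) IH => [[s1 s2] s3] /= IH; rewrite IH //.
congr (@trans T alg j _ _); apply: functional_extensionality => k.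
case ek: (e k j) => //; congr Some; rewrite hj.
case: (boolP (k \in F)) => hkF; first by rewrite (negbTE (FC _ hkF)).
case: (boolP (k \in C1)) => hkq; first by [].
have : k \in L by move: (cl _ _ ek hj); rewrite (negbTE hkF) (negbTE hkq) /= orbF.
by move=> hkL; rewrite IH.
Qed.

Lemma eqM (M : {set T}) :
  (forall j, j \in M -> j \notin F) -> (forall j, j \in M -> j \notin C2) ->
  (forall j, j \in M -> j \notin L) ->
  (forall k, k \in F -> k \notin C2) ->
  (forall u v, e u v -> v \in M -> [|| u \in M, u \in F | u \in C2]) ->
  forall r j, j \in M -> (joint r).1.1 j = (joint r).2 j.
Proof.
move=> MF MC ML FC cl; elim=> [|r IH] j hj /=; first by rewrite /in1 (negbTE (ML _ hj)).
case: (joint r) IH => [[s1 s2] s3] /= IH; rewrite IH //.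
congr (@trans T alg j _ _); apply: functional_extensionality => k.
case ek: (e k j) => //; congr Some; rewrite (negbTE (ML _ hj)).
case: (boolP (k \in F)) => hkF; first by rewrite (negbTE (FC _ hkF)).
case: (boolP (k \in C2)) => hkq; first by [].
have : k \in M by move: (cl _ _ ek hj); rewrite (negbTE hkF) (negbTE hkq) /= orbF.
by move=> hkM; rewrite IH.
Qed.

End Sim.

Lemma decides_transfer (T : finType) (e : rel T) (alg : algorithm T) (F F' : {set T}) (adv adv' : nat -> T -> T -> msg_t alg) (inp inp' : T -> bool) (i : T) (c : bool) :
  (forall r, exec e F adv inp r i = exec e F' adv' inp' r i) ->
  decides e F adv inp i c -> decides e F' adv' inp' i c.
Proof.
move=> H [r [h1 h2]]; exists r; split; first by rewrite -H.
by move=> r' hr; rewrite -H; apply: h2.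
Qed.

Lemma sim (T : finType) (e : rel T) (f : nat) (alg : algorithm T)
  (F C1 C2 L M : {set T}) (a b : T) :
  correct_byz_consensus e f alg -> #|F| <= f -> #|C1| <= f -> #|C2| <= f ->
  (forall k, k \in F -> k \notin C1) -> (forall k, k \in F -> k \notin C2) ->
  (forall j, j \in L -> j \notin F) -> (forall j, j \in L -> j \notin C1) ->
  (forall j, j \in M -> j \notin F) -> (forall j, j \in M -> j \notin C2) ->
  (forall j, j \in M -> j \notin L) ->
  (forall u v, e u v -> v \in L -> [|| u \in L, u \in F | u \in C1]) ->
  (forall u v, e u v -> v \in M -> [|| u \in M, u \in F | u \in C2]) ->
  b \in L -> a \in M -> False.
Proof.
move=> cor hF hC1 hC2 FC1 FC2 LF LC1 MF MC2 ML clL clM hb ha.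
have [_ [ag1 _]] := cor F hF (adv1 e alg F C1 C2 L) (in1 L).
have [tm2 [_ va2]] := cor C1 hC1 (adv2 e alg F C1 C2 L) (fun _ => true).
have [tm3 [_ va3]] := cor C2 hC2 (adv2 e alg F C1 C2 L) (fun _ => false).
have [c2 hc2] := tm2 b (LC1 _ hb).
have [j [_ hj]] := va2 _ _ (LC1 _ hb) hc2; subst c2.
have [c3 hc3] := tm3 a (MC2 _ ha).
have [j' [_ hj']] := va3 _ _ (MC2 _ ha) hc3; subst c3.
have d1b : decides e F (adv1 e alg F C1 C2 L) (in1 L) b true.
  apply: decides_transfer hc2 => r.
  by rewrite ex1 ex2 (eqL alg C2 LF LC1 FC1 clL r hb).
have d1a : decides e F (adv1 e alg F C1 C2 L) (in1 L) a false.
  apply: decides_transfer hc3 => r.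
  by rewrite ex1 ex3 (eqM alg C1 MF MC2 ML FC2 clM r ha).
by have := ag1 _ _ _ _ (LF _ hb) (MF _ ha) d1b d1a.
Qed.


Section Cut.
Variables (T : finType) (e : rel T) (f : nat).
Hypothesis Hirr : irreflexive e.

Definition fan (A F : {set T}) (b : T) :=
  exists P : 'I_f.+1 -> seq T,
      (forall k, is_Abpath e A b (P k) /\ excludes F (P k)) /\
      (forall k l, k != l -> forall x, x \in P k -> x \in P l -> x = b).

Lemma cut_lemma (A F : {set T}) (b : T) : b \notin A -> b \notin F -> [disjoint A & F] -> ~ fan A F b ->
  exists L C : {set T}, [/\ #|C| <= f, (forall k, k \in F -> k \notin C),
     (forall j, j \in L -> j \notin C), (forall j, j \in L -> j \notin F) &
     [/\ (forall j, j \in L -> j \notin A), b \in L &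
        forall u v, e u v -> v \in L -> [|| u \in L, u \in F | u \in C]]].
Proof.
move=> bA bF AF nfan.
pose rH := fun u v => [&& e u v, u \notin F, v \notin F, u != b & v != b].
pose Y := [set y | e y b & y \notin F].
have [Z [hsep hZ]] : exists Z, sep rH A Y Z /\ #|Z| <= f.
  apply: NNPP => Hc; apply: nfan.
  have [Q [hQ hQd]] : exists Q : 'I_f.+1 -> {set T}, mfam rH A Y Q.
    apply: menger => Z hs; rewrite ltnNge; apply/negP => hle; apply: Hc; by exists Z.
  have hP : forall k, exists s : seq T, [/\ is_Abpath e A b s, excludes F s &
      forall v, v \in s -> v = b \/ v \in Q k].
    move=> k; have [x [y [hx hy hxQ hyQ hc]]] := hQ k.
    case/connectP: hc => p hp; case: (shortenP hp) => p' hp' hu _ hl.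
    have hall : forall v, v \in x :: p' -> [&& v != b, v \notin F & v \in Q k].
      apply: (path_notin (P := fun v => [&& v != b, v \notin F & v \in Q k])) hp' _ _.
      - rewrite hxQ andbT; apply/andP; split.
          by apply/negP=> /eqP ex; move: bA; rewrite -ex hx.
        by apply/negP => hxF; have := disjointFr AF hx; rewrite hxF.
      - by move=> u v /and3P [/and5P [_ _ -> _ ->] _ ->].
    exists (x :: rcons p' b); split.
    - rewrite /is_Abpath; split => //.
      + rewrite rcons_path; apply/andP; split.
          by apply: sub_path hp' => u v /and3P[/and5P[]].
        by rewrite -hl; move: hy; rewrite inE => /andP[].
      + by rewrite last_rcons.
      + rewrite -rcons_cons rcons_uniq hu andbT; apply/negP => hbin.
        by have := hall _ hbin; rewrite eqxx.
    - rewrite /excludes -rcons_cons all_rcons bF andTb; apply/allP => v hv.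
      by case/and3P: (hall v hv).
    - move=> v; rewrite -rcons_cons mem_rcons inE => /orP[/eqP->|hv]; first by left.
      by right; case/and3P: (hall v hv).
  have [P hPP] := fin_all_exists hP.
  exists P; split; first by move=> k; case: (hPP k).
  move=> k l hkl v hvk hvl.
  case: (hPP k) => _ _ hk; case: (hPP l) => _ _ hl.
  case: (hk v hvk) => // hvQk; case: (hl v hvl) => // hvQl.
  have D := hQd k l hkl; move/disjP in D; by case: (D v hvQk hvQl).
pose C := Z :\: F :\ b.
have hC : #|C| <= f.
  apply: leq_trans hZ; apply: subset_leq_card; apply/subsetP => v.
  by rewrite !inE => /and3P[].
have sepC : sep rH A Y C.
  move=> x y hx hy nx ny; apply/negP => hc.
  have xF : x \notin F by apply/negP => h; have := disjointFr AF hx; rewrite h.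
  have xb : x != b by apply/negP => /eqP ex; move: bA; rewrite -ex hx.
  have yF : y \notin F by move: hy; rewrite inE => /andP[].
  have yb : y != b by apply/negP => /eqP ey; move: hy; rewrite inE ey Hirr.
  have nx' : x \notin Z by move: nx; rewrite !inE xb xF.
  have ny' : y \notin Z by move: ny; rewrite !inE yb yF.
  move: (hsep x y hx hy nx' ny') => /negP; apply; apply: connect_mono hc.
  move=> u v /and3P [huv hu hv]; case/and5P: (huv) => _ uF vF ub vb.
  rewrite /restr huv /=; move: hu hv; rewrite !inE ub uF vb vF /= => -> ->.
  done.
pose L := [set u | (u == b) || [&& u \notin F, u \notin C &
   [exists y, [&& y \in Y, y \notin C & connect (restr rH C) u y]]]].
exists L, C; split => //.
- by move=> k hk; rewrite !inE hk /= andbF.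
- move=> j; rewrite inE => /orP[/eqP->|/and3P[_ h _] //].
  by rewrite !inE eqxx.
- by move=> j; rewrite inE => /orP[/eqP->//|/and3P[h _ _] //].
split.
- move=> j; rewrite inE => /orP[/eqP->//|/and3P[jF jC /existsP [y /and3P [hy yC hc]]]].
  apply/negP => hjA; move: (sepC j y hjA hy jC yC); by rewrite hc.
- by rewrite inE eqxx.
move=> u v huv hv.
case: (boolP (u \in F)) => uF; first by rewrite orbT.
case: (boolP (u \in C)) => uC; first by rewrite !orbT.
rewrite ?orbF.
case: (u =P b) => [->|/eqP ub]; first by rewrite inE eqxx.
rewrite inE; apply/orP; right; apply/and3P; split => //.
case: (v =P b) => [vb|/eqP vb].
  apply/existsP; exists u; rewrite connect0 uC andbT inE -vb huv uF.
  by [].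
move: hv; rewrite inE (negbTE vb) /= => /and3P [vF vC /existsP [y /and3P [hy yC hc]]].
apply/existsP; exists y; rewrite hy yC /=; apply: connect_trans hc; apply: connect1.
by rewrite /restr /rH huv uF vF ub vb uC vC.
Qed.

End Cut.

Lemma necessity (T : finType) (e : rel T) (f : nat) : irreflexive e ->
  byz_consensus_possible e f ->
  forall A B F : {set T},
     A :|: B :|: F = setT ->
     [disjoint A & B] -> [disjoint A & F] -> [disjoint B & F] ->
     A != set0 -> B != set0 -> #|F| <= f ->
     propagates e f F A B \/ propagates e f F B A.
Proof.
move=> Hirr [alg cor] A B F hU AB AF BF hA hB hF.
apply: NNPP => Hn.
have nAB : exists2 b, b \in B & ~ fan e f A F b.
  apply: NNPP => H; apply: Hn; left; right => b hb; apply: NNPP => hf.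
  by apply: H; exists b.
have nBA : exists2 a, a \in A & ~ fan e f B F a.
  apply: NNPP => H; apply: Hn; right; right => b hb; apply: NNPP => hf.
  by apply: H; exists b.
case: nAB => b hbB nfb; case: nBA => a haA nfa.
have bA : b \notin A by apply/negP => h; rewrite (disjointFr AB h) in hbB.
have bF : b \notin F by apply/negP => h; rewrite (disjointFl BF h) in hbB.
have aB : a \notin B by apply/negP => h; rewrite (disjointFl AB h) in haA.
have aF : a \notin F by apply/negP => h; rewrite (disjointFl AF h) in haA.
have [L [C1 [hC1 FC1 LC1 LF [LA hbL clL]]]] := cut_lemma Hirr bA bF AF nfb.
have [M [C2 [hC2 FC2 MC2 MF [MB haM clM]]]] := cut_lemma Hirr aB aF BF nfa.
apply: (sim cor hF hC1 hC2 FC1 FC2 LF LC1 MF MC2 _ clL clM hbL haM).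
move=> j hjM; apply/negP => hjL.
have : j \in A :|: B :|: F by rewrite hU inE.
by rewrite !inE (negbTE (LA _ hjL)) (negbTE (MB _ hjM)) (negbTE (LF _ hjL)).
Qed.

Definition pb (P : Prop) : bool := if excluded_middle_informative P then true else false.
Lemma pbP (P : Prop) : pb P = true <-> P.
Proof. by rewrite /pb; case: excluded_middle_informative. Qed.

Section Alg.
Variables (T : finType) (e : rel T) (f : nat).

Definition st_t := (nat * bool * (seq T -> option bool))%type.
Definition ms_t := seq T -> option bool.

Definition relay (i : T) (v : bool) (m : T -> option ms_t) (q : seq T) : option bool :=
 match q with
 | x :: q' => if x == i then
      (match q' with [::] => Some v | k :: _ => match m k with Some Rk => Rk q' | None => None end end)
    else None
 | [::] => None end.
Definition R0 (i : T) (b : bool) (q : seq T) : option bool := if q == [:: i] then Some b else None.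
Definition sched : seq {set T} := enum {set T}.
Definition Fph (p : nat) : {set T} := nth set0 sched (p %/ 2).
Definition D := #|T|.
Definition Rend := (2 * size sched) * D.

Definition src (Fs : {set T}) :=
  [set s | (s \notin Fs) && [forall u, (u \notin Fs) ==> connect (restr e Fs) s u]].
Definition witness (i : T) (R : ms_t) (w : bool) : Prop :=
  exists P : 'I_f.+1 -> seq T,
    (forall k, is_Abpath e [set~ i] i (P k) /\ R (rev (P k)) = Some w) /\
    (forall k l, k != l -> forall x, x \in P k -> x \in P l -> x = i).
Definition est (Fs : {set T}) (i : T) (R : ms_t) (j : T) : bool :=
  pb (exists p, [/\ is_Abpath e [set j] i p, excludes Fs p & R (rev p) = Some true]).
Definition target (Fs : {set T}) (i : T) (R : ms_t) : bool :=
  let S := src Fs in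
  let S1 := [set j in S | est Fs i R j] in
  let S0 := [set j in S | ~~ est Fs i R j] in
  if S1 == set0 then false else if S0 == set0 then true
  else if pb (propagates e f Fs S0 (~: Fs :\: S0)) then false else true.
Definition rule (Fs : {set T}) (i : T) (v : bool) (R : ms_t) : bool :=
  let w := target Fs i R in if pb (witness i R w) then w else v.

Definition mytrans (i : T) (st : st_t) (m : T -> option ms_t) : st_t :=
  let: (c, v, R) := st in
  let R' := relay i v m in
  if c.+1 %% D == 0 then
    let v' := rule (Fph (c.+1 %/ D).-1) i v R' in (c.+1, v', R0 i v')
  else (c.+1, v, R').
Definition mydecide (i : T) (st : st_t) : option bool :=
  if st.1.1 == Rend then Some st.1.2 else None.

Definition myalg : algorithm T :=
  @Algorithm T st_t ms_t (fun i b => (0, b, R0 i b)) (fun k st j => st.2) mytrans mydecide.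

Definition good (Fs : {set T}) x q := path e x q && all (fun v => v \notin Fs) (x :: q).
Definition GoodR (Fs : {set T}) (V : T -> bool) (i : T) (R : ms_t) (t : nat) :=
  forall x q, good Fs x q -> last x q = i -> size q <= t -> R (rev (x :: q)) = Some (V x).

Lemma relay_good (Fs : {set T}) (V : T -> bool) (i : T) (m : T -> option ms_t) (Rk : T -> ms_t) (t : nat) :
  (forall k, e k i -> k \notin Fs -> m k = Some (Rk k)) ->
  (forall k, e k i -> k \notin Fs -> GoodR Fs V k (Rk k) t) ->
  GoodR Fs V i (relay i (V i) m) t.+1.
Proof.
move=> hm hg x q; case/lastP: q => [|q y].
  by move=> _ /= ->; rewrite /relay /= eqxx.
rewrite last_rcons => hgood hy; subst y; rewrite size_rcons ltnS => hs.
move: hgood; rewrite /good -rcons_cons rcons_path all_rcons => /andP[/andP[hp hek] /andP[hi ha]].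
rewrite rev_rcons (lastI x q) rev_rcons /relay eqxx.
have hk : last x q \notin Fs by apply: (allP ha); apply: mem_last.
rewrite (hm _ hek hk) -rev_rcons -lastI.
by apply: (hg _ hek hk) => //; rewrite /good hp ha.
Qed.

Section Exec.
Variables (Fs : {set T}) (adv : nat -> T -> T -> ms_t) (input : T -> bool).
Definition ex r := exec e Fs (adv : nat -> T -> T -> msg_t myalg) input r.
Definition msgs r i := fun k => if e k i then Some (if k \in Fs then adv r k i else (ex r k).2) else None.

Lemma exS r i : ex r.+1 i = mytrans i (ex r i) (msgs r i).
Proof. by []. Qed.

Lemma ex_cnt r i : (ex r i).1.1 = r.
Proof.
elim: r i => [//|r IH] i; rewrite exS; move: (IH i).
by case: (ex r i) => [[c v] R] /= ->; rewrite /mytrans; case: ifP.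
Qed.

Hypothesis hD : 0 < D.

Lemma ex_reset p i : (ex (p * D) i).2 = R0 i (ex (p * D) i).1.2.
Proof.
case: p => [//|p].
have E : p.+1 * D = (p * D + D.-1).+1 by rewrite mulSnr -addnS prednK.
rewrite E exS; move: (ex_cnt (p * D + D.-1) i).
case: (ex _ i) => [[c v] R] /= ->; rewrite /mytrans -E modnMl eqxx /=.
by [].
Qed.

Definition V p x := (ex (p * D) x).1.2.

Lemma phase_inv p t : t < D -> forall i, (ex (p * D + t) i).1.2 = V p i /\
  (i \notin Fs -> GoodR Fs (V p) i (ex (p * D + t) i).2 t).
Proof.
elim: t => [|t IH] ht i.
  rewrite addn0; split=> // _ x q _ hl; rewrite leqn0 => /nilP hq; subst q.
  by move: hl => /= ->; rewrite ex_reset /R0 /= eqxx.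
have ht' : t < D by apply: ltnW.
rewrite addnS exS; move: (ex_cnt (p * D + t) i) (IH ht' i).
case: (ex _ i) => [[c v] R] /= -> [hv hg]; rewrite /mytrans.
have -> : ((p * D + t).+1 %% D == 0) = false.
  by rewrite -addnS modnMDl modn_small.
split=> // hi; rewrite hv.
apply: (relay_good (Rk := fun k => (ex (p * D + t) k).2)).
  by move=> k hk hkF; rewrite /msgs hk (negbTE hkF).
by move=> k hk hkF; case: (IH ht' k) => _; apply.
Qed.

Lemma boundary p i : exists R', (ex (p.+1 * D) i).1.2 = rule (Fph p) i (V p i) R' /\
  (i \notin Fs -> GoodR Fs (V p) i R' D).
Proof.
have E : p.+1 * D = (p * D + D.-1).+1 by rewrite mulSnr -addnS prednK.
have ht : D.-1 < D by rewrite prednK.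
rewrite E exS; move: (ex_cnt (p * D + D.-1) i) (phase_inv p ht i).
case: (ex _ i) => [[c v] R] /= -> [hv hg]; rewrite /mytrans -E modnMl eqxx /=.
rewrite mulnK //= hv; exists (relay i (V p i) (msgs (p * D + D.-1) i)); split=> // hi.
rewrite -[X in GoodR _ _ _ _ X](prednK hD).
apply: (relay_good (Rk := fun k => (ex (p * D + D.-1) k).2)).
  by move=> k hk hkF; rewrite /msgs hk (negbTE hkF).
by move=> k hk hkF; case: (phase_inv p ht k) => _; apply.
Qed.

End Exec.
End Alg.

Section Rules.
Variables (T : finType) (e : rel T) (f : nat).
Hypothesis Hirr : irreflexive e.
Variables (Fs : {set T}) (V : T -> bool) (RR : T -> ms_t T).
Hypothesis hFs : #|Fs| <= f.
Hypothesis hR : forall i, i \notin Fs -> GoodR e Fs V i (RR i) (D T).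

Lemma goodR_uniq i x q : i \notin Fs -> path e x q -> all (fun v => v \notin Fs) (x :: q) ->
  uniq (x :: q) -> last x q = i -> RR i (rev (x :: q)) = Some (V x).
Proof.
move=> hi hp ha hu hl; apply: (hR hi) => //; first by rewrite /good hp ha.
have := max_card (mem (x :: q)); move/card_uniqP: hu => ->; rewrite /D /= => h.
by apply: leq_trans h; apply: leqnSn.
Qed.

Lemma pigeon i (P : 'I_f.+1 -> seq T) : i \notin Fs ->
  (forall k l, k != l -> forall x, x \in P k -> x \in P l -> x = i) ->
  exists k, all (fun v => v \notin Fs) (P k).
Proof.
move=> hi hdis; apply: NNPP => H.
have H' : forall k, exists v, v \in P k /\ v \in Fs.
  move=> k; apply: NNPP => Hk; apply: H; exists k; apply/allP => v hv.
  by apply/negP => hvF; apply: Hk; exists v.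
have [g hg] := fin_all_exists H'.
have ginj : injective g.
  move=> k l hkl; apply/eqP; apply/negPn/negP => hne.
  have := hdis k l hne (g k) (hg k).1; rewrite hkl => /(_ (hg l).1) hgi.
  by move: (hg l).2; rewrite hgi (negbTE hi).
have : #|[set g k | k in 'I_f.+1]| <= #|Fs|.
  by apply: subset_leq_card; apply/subsetP => v /imsetP [k _ ->]; case: (hg k).
rewrite card_imset // card_ord => h.
by move: (leq_trans h hFs); rewrite ltnn.
Qed.

Lemma ruleV Fx i : i \notin Fs -> exists j, j \notin Fs /\ rule e f Fx i (V i) (RR i) = V j.
Proof.
move=> hi; rewrite /rule; case hw: (pb _); last by exists i.
move/pbP: hw => [P [hP hdis]]; have [k hk] := pigeon hi hdis.
case: (hP k); case: (P k) hk => [//|x q] hall [hx hp hl hu] hRk.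
exists x; split; first by case/andP: hall.
by move: hRk; rewrite (goodR_uniq hi hp hall hu hl) => -[->].
Qed.

End Rules.

Section Graph.
Variables (T : finType) (e : rel T) (f : nat).
Hypothesis Hirr : irreflexive e.
Hypothesis Cond : forall A B F : {set T},
     A :|: B :|: F = setT ->
     [disjoint A & B] -> [disjoint A & F] -> [disjoint B & F] ->
     A != set0 -> B != set0 -> #|F| <= f ->
     propagates e f F A B \/ propagates e f F B A.

Lemma path_restr (F : {set T}) x q : path e x q -> all (fun v => v \notin F) (x :: q) ->
  path (restr e F) x q.
Proof.
elim: q x => [//|y q IH] x /= /andP[hxy hp] /and3P[hx hy ha].
by rewrite /restr hxy hx hy /=; apply: IH => //=; rewrite hy.
Qed.

Lemma abpath_conn (A F : {set T}) b p : is_Abpath e A b p -> excludes F p ->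
  exists2 x, x \in A & connect (restr e F) x b.
Proof.
case: p => [//|x q] [hx hp hl _] hex; exists x => //.
by apply/connectP; exists q => //; apply: path_restr.
Qed.

Lemma prop_path (A B F : {set T}) b : propagates e f F A B -> b \in B ->
  exists2 x, x \in A & connect (restr e F) x b.
Proof.
case=> [hB|H] hb; first by rewrite hB inE in hb.
have [P [hP _]] := H b hb; case: (hP ord0) => h1 h2.
exact: abpath_conn h1 h2.
Qed.

Lemma connect_restr_out (F : {set T}) a b : connect (restr e F) a b -> a \notin F -> b \notin F.
Proof. by move=> hc ha; case: (connect_last hc) => [<-//|[c /and3P[]]]. Qed.

Lemma srcP (F : {set T}) s : reflect (s \notin F /\ forall u, u \notin F -> connect (restr e F) s u)
  (s \in src e F).
Proof.
rewrite /src inE; apply: (iffP andP) => [[h1 /forallP h2]|[h1 h2]]; split => //.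
  by move=> u hu; move: (h2 u); rewrite hu.
by apply/forallP => u; apply/implyP; apply: h2.
Qed.

Lemma src_closed (F : {set T}) v s : v \notin F -> s \in src e F ->
  connect (restr e F) v s -> v \in src e F.
Proof.
move=> hv /srcP [hs hall] hc; apply/srcP; split => // u hu.
exact: connect_trans hc (hall u hu).
Qed.

Lemma src_nonempty (F : {set T}) s0 : #|F| <= f -> s0 \notin F -> exists s, s \in src e F.
Proof.
move=> hF hs0.
pose reach s := [set u | connect (restr e F) s u].
have [s hs hmax] := @arg_maxnP T s0 (fun s => s \notin F) (fun s => #|reach s|) hs0.
exists s; apply/srcP; split => // u hu; apply: NNPP => hnu.
pose A := reach s; pose B := ~: F :\: A.
have hAF : [disjoint A & F].
  apply/disjP => v; rewrite inE => hv hvF.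
  by move: (connect_restr_out hv hs); rewrite hvF.
have hsA : s \in A by rewrite inE connect0.
have huB : u \in B by rewrite !inE hu andbT; apply/negP.
have hU : A :|: B :|: F = setT.
  apply/setP => v; rewrite !inE; case: (v \in F); rewrite ?orbT //.
  by case: (connect _ _ _).
have hAB : [disjoint A & B].
  by apply/disjP => v; rewrite !inE => h1 /andP[h2 _]; rewrite h1 in h2.
have hBF : [disjoint B & F].
  by apply/disjP => v; rewrite !inE => /andP[_ h1] h2; rewrite h2 in h1.
have hA0 : A != set0 by apply/set0Pn; exists s.
have hB0 : B != set0 by apply/set0Pn; exists u.
case: (Cond hU hAB hAF hBF hA0 hB0 hF) => hp.
  have [x hx hc] := prop_path hp huB; apply: hnu.
  by move: hx; rewrite inE => /connect_trans; apply.
have [x hx hc] := prop_path hp hsA.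
have hxF : x \notin F by move: hx; rewrite !inE => /andP[_ h].
have hxs : x \notin A by move: hx; rewrite !inE => /andP[h _].
have : A \proper reach x.
  apply/properP; split.
    by apply/subsetP => v; rewrite !inE => /(connect_trans hc).
  by exists x; rewrite // inE connect0.
move/proper_card => hlt.
by move: (hmax x hxF) => /= h; move: (leq_trans hlt h); rewrite /A ltnn.
Qed.

Lemma src_prop (F : {set T}) : #|F| <= f -> src e F != set0 ->
  propagates e f F (src e F) (~: F :\: src e F).
Proof.
move=> hF hS.
case: (set_0Vmem (~: F :\: src e F)) => [->|[u hu]]; first by left.
have hU : src e F :|: (~: F :\: src e F) :|: F = setT.
  apply/setP => v; rewrite !in_setU in_setD in_setC in_setT.
  by case: (v \in F); case: (v \in src e F).
have hAB : [disjoint src e F & ~: F :\: src e F].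
  by apply/disjP => v h1; rewrite in_setD h1.
have hAF : [disjoint src e F & F].
  by apply/disjP => v /srcP [h1 _] h2; rewrite h2 in h1.
have hBF : [disjoint ~: F :\: src e F & F].
  by apply/disjP => v; rewrite in_setD in_setC => /andP[_ h1] h2; rewrite h2 in h1.
have hB0 : ~: F :\: src e F != set0 by apply/set0Pn; exists u.
case: (Cond hU hAB hAF hBF hS hB0 hF) => // hp.
case/set0Pn: hS => s hs.
have [x hx hc] := prop_path hp hs.
have hxF : x \notin F by move: hx; rewrite in_setD in_setC => /andP[_ h].
by move: hx; rewrite in_setD (src_closed hxF hs hc).
Qed.

Lemma mixed (F S0 S1 : {set T}) : #|F| <= f ->
  (forall s, s \in src e F -> (s \in S0) != (s \in S1)) ->
  S0 \subset src e F -> S1 \subset src e F ->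
  S0 != set0 -> S1 != set0 -> ~ propagates e f F S0 (~: F :\: S0) ->
  forall s, s \in S0 -> exists P : 'I_f.+1 -> seq T,
      (forall k, [/\ is_Abpath e (~: F :\: S0) s (P k), excludes F (P k) &
                    head s (P k) \in S1]) /\
      (forall k l, k != l -> forall x, x \in P k -> x \in P l -> x = s).
Proof.
move=> hF hxor hS0 hS1 h0 h1 hnp s hs.
have S0F : forall v, v \in S0 -> v \notin F.
  by move=> v /(subsetP hS0) /srcP [].
have hU : S0 :|: (~: F :\: S0) :|: F = setT.
  apply/setP => v; rewrite !inE; case: (v \in F); rewrite ?orbT //.
  by case: (v \in S0).
have hAB : [disjoint S0 & ~: F :\: S0].
  by apply/disjP => v q1; rewrite !inE q1.
have hAF : [disjoint S0 & F].
  by apply/disjP => v /S0F q1 q2; rewrite q2 in q1.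
have hBF : [disjoint ~: F :\: S0 & F].
  by apply/disjP => v; rewrite !inE => /andP[_ q1] q2; rewrite q2 in q1.
have hB0 : ~: F :\: S0 != set0.
  case/set0Pn: h1 => v hv; apply/set0Pn; exists v.
  have hvS := subsetP hS1 _ hv; move: (hxor v hvS); rewrite hv.
  case/srcP: hvS => hvF _; rewrite !inE hvF andbT.
  by case: (v \in S0).
case: (Cond hU hAB hAF hBF h0 hB0 hF) => // hp.
case: hp => [hS0e|H]; first by rewrite hS0e eqxx in h0.
have [P [hP hdis]] := H s hs; exists P; split => // k.
case: (hP k) => ha hex; split => //.
move: ha hex; case: (P k) => [//|y q] [hy hp hl hu] hex /=.
have hc : connect (restr e F) y s by apply/connectP; exists q => //; apply: path_restr.
have hyF : y \notin F by move: hy; rewrite !inE => /andP[].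
have hyS : y \in src e F := src_closed hyF (subsetP hS0 _ hs) hc.
move: (hxor y hyS); move: hy; rewrite !inE => /andP[/negbTE -> _].
by case: (y \in S1).
Qed.

End Graph.

Lemma eq_in_set (T : finType) (S : {set T}) (P Q : pred T) :
  (forall j, j \in S -> P j = Q j) -> [set j in S | P j] = [set j in S | Q j].
Proof.
by move=> H; apply/setP => j; rewrite !inE; case: (boolP (j \in S)) => // hj; rewrite H.
Qed.

Lemma in_setIn (T : finType) (S : {set T}) (P : pred T) j :
  (j \in [set j in S | P j]) = (j \in S) && P j.
Proof. by rewrite inE. Qed.

Section Agree.
Variables (T : finType) (e : rel T) (f : nat).
Hypothesis Hirr : irreflexive e.
Hypothesis Cond : forall A B F : {set T},
     A :|: B :|: F = setT ->
     [disjoint A & B] -> [disjoint A & F] -> [disjoint B & F] ->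
     A != set0 -> B != set0 -> #|F| <= f ->
     propagates e f F A B \/ propagates e f F B A.
Variables (Fs : {set T}) (V : T -> bool) (RR : T -> ms_t T).
Hypothesis hFs : #|Fs| <= f.
Hypothesis hR : forall i, i \notin Fs -> GoodR e Fs V i (RR i) (D T).
Variable i0 : T.
Hypothesis hi0 : i0 \notin Fs.

Lemma est_correct i j : i \notin Fs -> j \in src e Fs -> est e Fs i (RR i) j = V j.
Proof.
move=> hi /srcP [hjF hall]; case/connectP: (hall i hi) => p hp.
case: (shortenP hp) => p' hp' hu _ hl.
have ha : all (fun v => v \notin Fs) (j :: p').
  apply/allP; apply: (path_notin (P := fun v => v \notin Fs)) hp' hjF _.
  by move=> u v /and3P[].
have hpe : path e j p' by apply: sub_path hp' => u v /and3P[].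
have hg := goodR_uniq hR hi hpe ha hu (esym hl).
rewrite /est; case hV: (V j).
  apply/pbP; exists (j :: p'); split => //; first by split => //; rewrite inE.
  by rewrite hg hV.
apply/negbTE/negP => /pbP [[|x q] [hab hex hRq]] //.
case: hab => hx hpq hlq huq; move: hx; rewrite inE => /eqP hx; subst x.
by move: hRq; rewrite (goodR_uniq hR hi hpq hex huq hlq) hV.
Qed.

Definition targetV : bool :=
  let S := src e Fs in
  let S1 := [set j in S | V j] in
  let S0 := [set j in S | ~~ V j] in
  if S1 == set0 then false else if S0 == set0 then true
  else if pb (propagates e f Fs S0 (~: Fs :\: S0)) then false else true.

Lemma target_eq i : i \notin Fs -> target e f Fs i (RR i) = targetV.
Proof.
move=> hi.
have E1 : [set j in src e Fs | est e Fs i (RR i) j] = [set j in src e Fs | V j].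
  by apply: eq_in_set => j hj; rewrite est_correct.
have E0 : [set j in src e Fs | ~~ est e Fs i (RR i) j] = [set j in src e Fs | ~~ V j].
  by apply: eq_in_set => j hj; rewrite est_correct.
by rewrite /target /targetV /= E1 E0.
Qed.

Lemma witness_fan i (A : {set T}) (P : 'I_f.+1 -> seq T) w : i \notin Fs -> i \notin A ->
  (forall k, is_Abpath e A i (P k) /\ excludes Fs (P k)) ->
  (forall k l, k != l -> forall x, x \in P k -> x \in P l -> x = i) ->
  (forall k, V (head i (P k)) = w) -> witness e f i (RR i) w.
Proof.
move=> hi hiA hP hdis hV; exists P; split => // k.
case: (hP k); move: (hV k); case: (P k) => [|x q] //= hVx [[hx hp hl hu] hex].
split; first by split => //; rewrite !inE; apply/negP => /eqP hxi; move: hiA; rewrite -hxi hx.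
by rewrite (goodR_uniq hR hi hp hex hu hl) hVx.
Qed.

Lemma rule_eq i w : i \notin Fs -> targetV = w ->
  (V i = w \/ witness e f i (RR i) w) -> rule e f Fs i (V i) (RR i) = w.
Proof.
move=> hi ht hw; rewrite /rule target_eq // ht.
case hpb: (pb _) => //; case: hw => // hw.
by move: hpb; have := (pbP (witness e f i (RR i) w)).2 hw => ->.
Qed.

Lemma src_ne : src e Fs != set0.
Proof. by have [s hs] := src_nonempty Cond hFs hi0; apply/set0Pn; exists s. Qed.

Lemma A2 c : (forall s, s \in src e Fs -> V s = c) ->
  forall i, i \notin Fs -> rule e f Fs i (V i) (RR i) = c.
Proof.
move=> hc i hi.
have ht : targetV = c.
  rewrite /targetV /=; case: c hc => hc.
    have -> : ([set j in src e Fs | V j] == set0) = false.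
      apply/negbTE; case/set0Pn: src_ne => s hs; apply/set0Pn; exists s.
      by rewrite in_setIn hs hc.
    have -> : [set j in src e Fs | ~~ V j] == set0.
      apply/eqP/setP => j; rewrite in_setIn in_set0.
      by case: (boolP (j \in src e Fs)) => // hj; rewrite hc.
    by [].
  have -> : [set j in src e Fs | V j] == set0.
    apply/eqP/setP => j; rewrite in_setIn in_set0.
    by case: (boolP (j \in src e Fs)) => // hj; rewrite hc.
  by [].
apply: rule_eq => //.
case: (boolP (i \in src e Fs)) => his; first by left; apply: hc.
right; have hp := src_prop Cond hFs src_ne.
have hib : i \in ~: Fs :\: src e Fs by rewrite !in_setD in_setC his hi.
case: hp => [h0|H]; first by rewrite h0 in_set0 in hib.
have [P [hP hdis]] := H i hib.
apply: (witness_fan (w := c) hi his hP hdis) => k.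
case: (hP k); case: (P k) => [//|x q] [hx _ _ _] _ /=; exact: hc.
Qed.

Lemma A1 : (exists c, forall i, i \notin Fs -> rule e f Fs i (V i) (RR i) = c) \/
  (forall s, s \in src e Fs -> rule e f Fs s (V s) (RR s) = true).
Proof.
case h1: ([set j in src e Fs | V j] == set0).
  left; exists false; apply: A2 => s hs; apply: negbTE; apply/negP => hVs.
  by move/eqP/setP: h1 => /(_ s); rewrite in_setIn in_set0 hs hVs.
case h0: ([set j in src e Fs | ~~ V j] == set0).
  left; exists true; apply: A2 => s hs; apply: NNPP => /negP hVs.
  by move/eqP/setP: h0 => /(_ s); rewrite in_setIn in_set0 hs /= (negbTE hVs).
set S := src e Fs in h1 h0 *.
set S1 := [set j in S | V j] in h1 *; set S0 := [set j in S | ~~ V j] in h0 *.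
have htv : targetV = if pb (propagates e f Fs S0 (~: Fs :\: S0)) then false else true.
  by rewrite /targetV /= -/S -/S1 -/S0 h1 h0.
case hpb: (pb _) htv => htv.
  left; exists false => i hi; apply: rule_eq => //.
  case hVi: (V i); last by left.
  have hiS0 : i \notin S0 by rewrite in_setIn hVi andbF.
  have hib : i \in ~: Fs :\: S0 by rewrite in_setD in_setC hiS0 hi.
  right; move/pbP: hpb => [hS0|H].
    by rewrite hS0 in_set0 in hib.
  have [P [hP hdis]] := H i hib.
  apply: (witness_fan (w := false) hi hiS0 (fun k => hP k) hdis) => k.
  case: (hP k); case: (P k) => [//|x q] [hx _ _ _] _ /=.
  by move: hx; rewrite in_setIn => /andP[_ /negbTE].
right => s hs.
have hsF : s \notin Fs by case/srcP: hs.
apply: rule_eq => //.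
case hVs: (V s); first by left.
right.
have hnp : ~ propagates e f Fs S0 (~: Fs :\: S0).
  by move=> hp; have := (pbP _).2 hp; rewrite hpb.
have hxor : forall v, v \in S -> (v \in S0) != (v \in S1).
  by move=> v hv; rewrite !in_setIn hv /=; case: (V v).
have hS0s : S0 \subset S by apply/subsetP => v; rewrite in_setIn => /andP[].
have hS1s : S1 \subset S by apply/subsetP => v; rewrite in_setIn => /andP[].
have hs0 : s \in S0 by rewrite in_setIn hs hVs.
have [P [hP hdis]] := mixed Cond hFs hxor hS0s hS1s (negbT h0) (negbT h1) hnp hs0.
have hP' : forall k, is_Abpath e (~: Fs :\: S0) s (P k) /\ excludes Fs (P k).
  by move=> k; case: (hP k).
have hsn : s \notin ~: Fs :\: S0 by rewrite in_setD hs0.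
apply: (witness_fan (w := true) hsF hsn hP' hdis) => k. case: (hP k) => _ _; by rewrite in_setIn => /andP[].
Qed.

End Agree.

Lemma sufficiency (T : finType) (e : rel T) (f : nat) :
  irreflexive e -> 2 <= #|T| ->
  (forall A B F : {set T},
     A :|: B :|: F = setT ->
     [disjoint A & B] -> [disjoint A & F] -> [disjoint B & F] ->
     A != set0 -> B != set0 -> #|F| <= f ->
     propagates e f F A B \/ propagates e f F B A) ->
  byz_consensus_possible e f.
Proof.
move=> Hirr Hn Cond; exists (myalg e f) => Fs hFs adv input.
have hD : 0 < D T by apply: leq_trans Hn.
pose VV p i := V e f Fs adv input p i.
have step : forall p, exists RR : T -> ms_t T,
    (forall i, VV p.+1 i = rule e f (Fph T p) i (VV p i) (RR i)) /\
    (forall i, i \notin Fs -> GoodR e Fs (VV p) i (RR i) (D T)).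
  move=> p; have H : forall i, exists R' : ms_t T,
      VV p.+1 i = rule e f (Fph T p) i (VV p i) R' /\
      (i \notin Fs -> GoodR e Fs (VV p) i R' (D T)).
    by move=> i; apply: (boundary e f Fs adv input hD p i).
  have [RR hRR] := fin_all_exists H.
  by exists RR; split => i; case: (hRR i).
have valid : forall p i, i \notin Fs -> exists j, j \notin Fs /\ VV p i = input j.
  elim=> [|p IH] i hi; first by exists i.
  have [RR [hV hG]] := step p.
  rewrite hV; have [j [hj ->]] := ruleV hFs hG (Fph T p) hi.
  by apply: IH.
have pres : forall p c, (forall i, i \notin Fs -> VV p i = c) ->
    forall i, i \notin Fs -> VV p.+1 i = c.
  move=> p c hc i hi; have [RR [hV hG]] := step p.
  have [j [hj hh]] := ruleV hFs hG (Fph T p) hi.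
  by rewrite hV hh hc.
have pres2 : forall p q c, p <= q -> (forall i, i \notin Fs -> VV p i = c) ->
    forall i, i \notin Fs -> VV q i = c.
  move=> p q c /subnK <-; elim: (q - p) => [//|m IH] hc.
  by rewrite addSn; apply: pres; apply: IH.
pose N := size (sched T).
have decV : forall i b, decides e Fs adv input i b -> b = VV (2 * N) i.
  move=> i b [r [h1 _]]; move: h1; rewrite /= /mydecide.
  have := ex_cnt e f Fs adv input r i; rewrite /ex => ->.
  by case: eqP => // -> [<-].
split.
  move=> i hi; exists (VV (2 * N) i); exists (Rend T); split.
    rewrite /= /mydecide; have := ex_cnt e f Fs adv input (Rend T) i.
    by rewrite /ex => ->; rewrite eqxx.
  move=> r' hr'; rewrite /= /mydecide; have := ex_cnt e f Fs adv input r' i.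
  by rewrite /ex => ->; rewrite (ltn_eqF hr').
split.
  move=> i j b c hi hj hb hc; rewrite (decV _ _ hb) (decV _ _ hc).
  pose idx := index Fs (sched T).
  have hidx : idx < N by rewrite /idx index_mem /sched mem_enum.
  have F0 : Fph T (idx * 2) = Fs by rewrite /Fph mulnK // nth_index // /sched mem_enum.
  have F1 : Fph T (idx * 2).+1 = Fs.
    by rewrite /Fph -addn1 divnMDl // divn_small // addn0 nth_index // /sched mem_enum.
  have [c0 hc0] : exists c0, forall k, k \notin Fs -> VV (idx * 2).+2 k = c0.
    have [RR [hV hG]] := step (idx * 2).
    case: (A1 Cond hFs hG hi) => [[c0 hc0]|hs].
      exists c0; apply: pres => k hk; rewrite hV F0; exact: hc0.
    exists true.
    have [RR' [hV' hG']] := step (idx * 2).+1.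
    move=> k hk; rewrite hV' F1; apply: (A2 Cond hFs hG' hi) => // s hs'.
    rewrite hV F0; exact: hs.
  have hle : (idx * 2).+2 <= 2 * N by rewrite -addn2 -mulSnr mulnC leq_mul2l hidx orbT.
  by rewrite (pres2 _ _ _ hle hc0 _ hi) (pres2 _ _ _ hle hc0 _ hj).
move=> i b hi hb; rewrite (decV _ _ hb).
have [j [hj ->]] := valid (2 * N) i hi.
by exists j.
Qed.

Theorem theorem1 (T : finType) (e : rel T) (f : nat)
    (Hirr : irreflexive e) (Hn : 2 <= #|T|) :
  byz_consensus_possible e f <->
  (forall A B F : {set T},
     A :|: B :|: F = setT ->
     [disjoint A & B] -> [disjoint A & F] -> [disjoint B & F] ->
     A != set0 -> B != set0 -> #|F| <= f ->
     propagates e f F A B \/ propagates e f F B A).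
Proof.
split; first exact: necessity.
exact: sufficiency.
Qed.
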